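(* Let $T=(T,\eta,\mu)$ be a monad on a category $\mathbb{C}$ such that for every object $X$ the pair $\eta_{TX},T\eta_X:TX\to TTX$ has an equalizer $\theta_X:DX\to TX$, and let $D$ be the associated monad. Then $D$ is idempotent if and only if for every object $X$ the morphism $T\theta_X:TDX\to TTX$ is monic. In particular, $D$ is idempotent whenever $T$ maps regular monomorphisms to monomorphisms.
   Context: The monad $D$: for $g:Y\to Z$ in $\mathbb{C}$, $Dg:DY\to DZ$ is the unique morphism with $\theta_Z\circ Dg=Tg\circ\theta_Y$; the unit $e_X:X\to DX$ is the unique morphism with $\theta_X\circ e_X=\eta_X$; the multiplication $m_X:DDX\to DX$ is the unique morphism with $\theta_X\circ m_X=\mu_X\circ T\theta_X\circ\theta_{DX}$. (Equivalently, morphisms $X\to DY$ correspond, via composition with $\theta_Y$, to morphisms $f^\sharp:X\to TY$ with $\eta_{TY}\circ f^\sharp=T\eta_Y\circ f^\sharp$, and the Kleisli category of $D$ is the corresponding subcategory of $\mathsf{Kl}(T)$.) A monad is idempotent if its multiplication is a natural isomorphism. A regular monomorphism is a morphism which is an equalizer of some pair of morphisms. *)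

(* Defs.v *)
Set Implicit Arguments.
Unset Strict Implicit.

Record Category := {
  Ob :> Type;
  Hom : Ob -> Ob -> Type;
  idm : forall A, Hom A A;
  comp : forall A B C, Hom B C -> Hom A B -> Hom A C;
  comp_assoc : forall A B C D (h : Hom C D) (g : Hom B C) (f : Hom A B),
      comp h (comp g f) = comp (comp h g) f;
  comp_id_l : forall A B (f : Hom A B), comp (idm B) f = f;
  comp_id_r : forall A B (f : Hom A B), comp f (idm A) = f
}.

Arguments Hom {c} _ _.
Arguments idm {c} _.
Arguments comp {c A B C} _ _.
Notation "g \o f" := (comp g f) (at level 40, left associativity).

Record Endofunctor (C : Category) := {
  fobj :> C -> C;
  fmap : forall A B, Hom A B -> Hom (fobj A) (fobj B);
  fmap_id : forall A, fmap (idm A) = idm (fobj A);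
  fmap_comp : forall A B D (g : Hom B D) (f : Hom A B),
      fmap (g \o f) = fmap g \o fmap f
}.
Arguments fmap {C} _ {A B} _.

Record Monad (C : Category) := {
  mT :> Endofunctor C;
  eta : forall X : C, Hom X (mT X);
  mu : forall X : C, Hom (mT (mT X)) (mT X);
  eta_nat : forall X Y (f : Hom X Y), eta Y \o f = fmap mT f \o eta X;
  mu_nat : forall X Y (f : Hom X Y),
      mu Y \o fmap mT (fmap mT f) = fmap mT f \o mu X;
  mu_eta_l : forall X, mu X \o eta (mT X) = idm (mT X);
  mu_eta_r : forall X, mu X \o fmap mT (eta X) = idm (mT X);
  mu_assoc : forall X, mu X \o fmap mT (mu X) = mu X \o mu (mT X)
}.
Arguments eta {C} _ X.
Arguments mu {C} _ X.

Definition monic (C : Category) (A B : C) (f : Hom A B) : Prop :=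
  forall Z (g h : Hom Z A), f \o g = f \o h -> g = h.

Definition is_iso (C : Category) (A B : C) (f : Hom A B) : Prop :=
  exists g : Hom B A, g \o f = idm A /\ f \o g = idm B.

Definition is_equalizer (C : Category) (A B E : C) (f g : Hom A B) (e : Hom E A)
  : Prop :=
  f \o e = g \o e /\
  forall Z (h : Hom Z A), f \o h = g \o h ->
    exists k : Hom Z E, e \o k = h /\ forall k', e \o k' = h -> k' = k.

Definition regular_mono (C : Category) (A E : C) (m : Hom E A) : Prop :=
  exists (B : C) (f g : Hom A B), is_equalizer f g m.

Definition preserves_regmono_to_mono (C : Category) (F : Endofunctor C) : Prop :=
  forall (A E : C) (m : Hom E A), regular_mono m -> monic (fmap F m).

(* Given, for each X, an equalizer theta X : D X -> T X of eta_{TX}, T eta_X,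
   the multiplication m_X : DDX -> DX of the associated monad D is the unique
   morphism with theta_X o m_X = mu_X o T theta_X o theta_{DX}. *)
Definition is_D_mult {C : Category} (T : Monad C) (D : C -> C)
  (theta : forall X : C, Hom (D X) (T X))
  (m : forall X : C, Hom (D (D X)) (D X)) : Prop :=
  forall X : C, theta X \o m X = mu T X \o fmap T (theta X) \o theta (D X).

(* D is idempotent: its multiplication is an isomorphism (componentwise;
   naturality of the multiplication is automatic). *)
Definition D_idempotent {C : Category} (T : Monad C) (D : C -> C)
  (theta : forall X : C, Hom (D X) (T X)) : Prop :=
  exists m : forall X : C, Hom (D (D X)) (D X),
    @is_D_mult C T D theta m /\ forall X : C, is_iso (m X).
Arguments is_D_mult {C} T D theta m.
Arguments D_idempotent {C} T D theta.
Arguments preserves_regmono_to_mono {C} F.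

(* Main.v *)
Require Import Defs.
From Stdlib Require Import IndefiniteDescription.

Lemma cont {C : Category} {A B E : C} {b : Hom B E} {c : Hom A B} {x : Hom A E} :
  b \o c = x -> forall Z (d : Hom Z A), b \o (c \o d) = x \o d.
Proof. intros H Z d. rewrite comp_assoc, H. reflexivity. Qed.

Lemma eq_monic (C : Category) (A B E : C) (f g : Hom A B) (e : Hom E A) :
  is_equalizer f g e -> monic e.
Proof.
  intros [He Hu] Z k1 k2 Hk.
  assert (Hq : f \o (e \o k2) = g \o (e \o k2)).
  { rewrite !comp_assoc, He. reflexivity. }
  destruct (Hu Z (e \o k2) Hq) as [k [_ Hk']].
  rewrite (Hk' k1 Hk), (Hk' k2 eq_refl). reflexivity.
Qed.

Lemma eq_lift (C : Category) (A B E : C) (f g : Hom A B) (e : Hom E A) Z (h : Hom Z A) :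
  is_equalizer f g e -> f \o h = g \o h -> {k : Hom Z E | e \o k = h}.
Proof.
  intros [He Hu] Hh. apply constructive_indefinite_description.
  destruct (Hu Z h Hh) as [k [Hk _]]. exists k; exact Hk.
Qed.

Arguments eq_monic {C A B E f g e} _.
Arguments eq_lift {C A B E f g e Z h} _ _.

Ltac ra := repeat rewrite <- comp_assoc.
Tactic Notation "crw" constr(H) := first [rewrite (cont H) | rewrite H]; ra.

Section S.
Variables (C : Category) (T : Monad C) (D : C -> C)
  (theta : forall X : C, Hom (D X) (T X))
  (Htheta : forall X : C,
      is_equalizer (eta T (T X)) (fmap T (eta T X)) (theta X)).

Lemma Ylem X : eta T (T X) \o (mu T X \o (fmap T (theta X) \o theta (D X)))
   = fmap T (theta X) \o theta (D X).
Proof.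
  crw (eta_nat T (mu T X)).
  crw (eta_nat T (fmap T (theta X))).
  crw (proj1 (Htheta (D X))).
  assert (E2 : fmap T (fmap T (theta X)) \o fmap T (eta T (D X))
             = fmap T (eta T (T X)) \o fmap T (theta X)).
  { rewrite <- !fmap_comp, eta_nat. reflexivity. }
  crw E2.
  assert (E3 : fmap T (mu T X) \o fmap T (eta T (T X)) = idm _).
  { rewrite <- fmap_comp, mu_eta_l, fmap_id. reflexivity. }
  crw E3. apply comp_id_l.
Qed.

Lemma Y2lem X : fmap T (eta T X) \o (mu T X \o (fmap T (theta X) \o theta (D X)))
   = fmap T (theta X) \o theta (D X).
Proof.
  crw (eq_sym (mu_nat T (eta T X))).
  assert (E2 : fmap T (fmap T (eta T X)) \o fmap T (theta X)
             = fmap T (eta T (T X)) \o fmap T (theta X)).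
  { rewrite <- !fmap_comp, (proj1 (Htheta X)). reflexivity. }
  crw E2.
  crw (mu_eta_r T (T X)). 
  apply comp_id_l.
Qed.

Definition mth X : {m : Hom (D (D X)) (D X) |
   theta X \o m = mu T X \o (fmap T (theta X) \o theta (D X))}.
Proof.
  apply (eq_lift (Htheta X)). rewrite Ylem, Y2lem by exact Htheta. reflexivity.
Defined.

Definition ee X : {e : Hom X (D X) | theta X \o e = eta T X}.
Proof.
  apply (eq_lift (Htheta X)). apply eta_nat.
Defined.

Lemma th_monic X : monic (theta X).
Proof. exact (eq_monic (Htheta X)). Qed.

Lemma m_eps X (m : Hom (D (D X)) (D X)) :
  theta X \o m = mu T X \o fmap T (theta X) \o theta (D X) ->
  m \o proj1_sig (ee (D X)) = idm _.
Proof.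
  intro Hm. apply th_monic. rewrite comp_id_r, comp_assoc, Hm.
  destruct (ee (D X)) as [e He]; simpl. ra. crw He.
  crw (eq_sym (eta_nat T (theta X))). crw (mu_eta_l T X). apply comp_id_l.
Qed.

Lemma backward : (forall X, monic (fmap T (theta X))) -> D_idempotent T D theta.
Proof.
  intro HM. exists (fun X => proj1_sig (mth X)). split.
  - intro X. destruct (mth X) as [m Hm]; simpl. rewrite Hm. ra. reflexivity.
  - intro X. exists (proj1_sig (ee (D X))). split.
    + apply th_monic. rewrite comp_id_r.
      destruct (ee (D X)) as [e He] eqn:Ee; simpl. crw He.
      apply (HM X). crw (eq_sym (eta_nat T (theta X))).
      destruct (mth X) as [m Hm]; simpl. crw Hm. apply Ylem; exact Htheta.
    + apply m_eps. destruct (mth X) as [m Hm]; simpl. rewrite Hm. ra. reflexivity.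
Qed.

Lemma forward : D_idempotent T D theta -> forall X, monic (fmap T (theta X)).
Proof.
  intros [m [Hm Hi]] X.
  destruct (Hi X) as [g [Hg1 Hg2]].
  pose proof (m_eps X (m X) (Hm X)) as Hme.
  destruct (ee (D X)) as [eps Heps] eqn:Ee1; simpl in Hme.
  assert (Hge : eps = g).
  { rewrite <- (comp_id_l eps), <- Hg1, <- comp_assoc, Hme, comp_id_r. reflexivity. }
  destruct (ee X) as [e He] eqn:Ee2.
  assert (Hq : eta T (T (D X)) \o (fmap T e \o theta X)
             = fmap T (eta T (D X)) \o (fmap T e \o theta X)).
  { crw (eta_nat T (fmap T e)). crw (proj1 (Htheta X)).
    rewrite !comp_assoc, <- !fmap_comp, <- (eta_nat T e). reflexivity. }
  destruct (eq_lift (Htheta (D X)) Hq) as [k Hk].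
  assert (Hmk : m X \o k = idm _).
  { apply th_monic. rewrite comp_id_r, comp_assoc, Hm. ra. crw Hk.
    assert (E : fmap T (theta X) \o fmap T e = fmap T (eta T X)).
    { rewrite <- fmap_comp, He. reflexivity. }
    crw E. crw (mu_eta_r T X). apply comp_id_l. }
  assert (Hkg : k = g).
  { rewrite <- (comp_id_l k), <- Hg1, <- comp_assoc, Hmk, comp_id_r. reflexivity. }
  assert (Hfe : fmap T e \o theta X = eta T (D X)).
  { rewrite <- Hk, Hkg, <- Hge. exact Heps. }
  assert (Hret : forall Z (a : Hom Z (T (D X))),
     a = mu T (D X) \o (fmap T (fmap T e) \o (fmap T (theta X) \o a))).
  { intros Z a. crw (eq_sym (fmap_comp T (fmap T e) (theta X))).
    rewrite Hfe. crw (mu_eta_r T (D X)). rewrite comp_id_l. reflexivity. }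
  intros Z a b Hab. rewrite (Hret Z a), (Hret Z b). ra. rewrite Hab. reflexivity.
Qed.
End S.

Theorem lemma5p7 (C : Category) (T : Monad C)
  (D : C -> C) (theta : forall X : C, Hom (D X) (T X))
  (Htheta : forall X : C,
      is_equalizer (eta T (T X)) (fmap T (eta T X)) (theta X)) :
  (D_idempotent T D theta <-> forall X : C, monic (fmap T (theta X))) /\
  (preserves_regmono_to_mono T -> D_idempotent T D theta).
Proof.
  split; [split|].
  - apply forward; exact Htheta.
  - apply backward; exact Htheta.
  - intro HP. apply backward; [exact Htheta|]. intro X. apply HP.
    exists (T (T X)), (eta T (T X)), (fmap T (eta T X)). apply Htheta.
Qed.
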